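(* Let $a_1,\dots,a_n$ be positive integers and $K=R(a_1,\dots,a_n)$ a 2-bridge link. If $K$ is not $R(1,1,1,1)$, $R(1,a_2,1)$ (for any $a_2\ge1$), $R(1,1)$ or $R(1)$, then $$\det(R(a_1,\dots,a_n))\ge V(a_1,\dots,a_n).$$
   Context: For positive integers $b_1,\dots,b_r$, $R(b_1,\dots,b_r)$ denotes the 2-bridge link given by the standard alternating 2-bridge diagram with $r$ twist regions in a row, the $i$-th containing $b_i$ half-twists; $\det$ denotes $|\Delta(-1)|$ for the Alexander polynomial $\Delta$ (equivalently $\det R(b_1,\dots,b_r)=S(r)$ with $S(0)=1$, $S(1)=b_1$, $S(i+1)=b_{i+1}S(i)+S(i-1)$). $V(a_1,\dots,a_n)=\prod_{i=1}^n\frac{a_i+2}{2}$. *)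

(* Defs.v *)
From mathcomp Require Import all_boot all_order all_algebra.
Set Implicit Arguments. Unset Strict Implicit. Unset Printing Implicit Defensive.
Import Order.TTheory GRing.Theory Num.Theory.

(* Continuant recursion: given S(i-1) = prev, S(i) = cur, consume b_{i+1}, ... *)
Fixpoint continuant_aux (s : seq nat) (prev cur : nat) : nat :=
  match s with
  | [::] => cur
  | b :: t => continuant_aux t cur (b * cur + prev)
  end.

(* det R(b_1,...,b_r) = S(r), with S(0)=1, S(1)=b_1 (i.e. S(-1)=0),
   S(i+1) = b_{i+1} S(i) + S(i-1). *)
Definition det_R (s : seq nat) : nat := continuant_aux s 0 1.

Definition V (s : seq nat) : rat :=
  (\prod_(a <- s) ((a%:R + 2) / 2))%R.

(* Main.v *)
Require Import Defs.
From mathcomp Require Import all_boot all_order all_algebra.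
From mathcomp Require Import ring lra.
Import Order.TTheory GRing.Theory Num.Theory.

Local Open Scope ring_scope.

Lemma VE x t : V (x :: t) = (x%:R + 2) / 2 * V t.
Proof. by rewrite /V big_cons. Qed.

Lemma V0 : V [::] = 1.
Proof. by rewrite /V big_nil. Qed.

Lemma cstep b t p c : continuant_aux (b :: t) p c = continuant_aux t c (b * c + p).
Proof. by []. Qed.

Lemma pm (x y : rat) : 0 <= x -> 0 <= y -> 0 <= x * y.
Proof. exact: mulr_ge0. Qed.

Lemma inv (t : seq nat) (p c : nat) (v : rat) :
  all (fun x => 0 < x)%N t -> 0 <= v -> v <= c%:R -> 3/2 * v <= c%:R + p%:R ->
  v * V t <= (continuant_aux t p c)%:R.
Proof.
elim: t p c v => [|b t IH] p c v /= Ht v0 h1 h2; first by rewrite V0 mulr1.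
move/andP: Ht => [hb Ht].
have B1 : (1:rat) <= b%:R by rewrite ler1n.
have hc : (0:rat) <= p%:R by [].
have H1 := pm (b%:R - 1) (c%:R - v) ltac:(lra) ltac:(lra).
have H2 := pm (b%:R - 1) (v) ltac:(lra) ltac:(lra).
have H3 := pm (b%:R) (c%:R - v) ltac:(lra) ltac:(lra).
have H4 := pm (b%:R) (v) ltac:(lra) ltac:(lra).
rewrite VE mulrA; apply: IH; [exact: Ht|..].
- apply: pm => //; lra.
- rewrite natrD natrM. lra.
- rewrite !natrD natrM. lra.
Qed.

Lemma last5 q t : all (fun x => 0 < x)%N t -> (0 < q)%N ->
  V [:: 1%N, 1%N, 1%N, 1%N, q & t] <= (continuant_aux t 5 (q * 5 + 3))%:R.
Proof.
move=> Ht hq.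
have Q1 : (1:rat) <= q%:R by rewrite ler1n.
rewrite !VE !mulrA; apply: inv; [exact: Ht|..]; rewrite ?(natrD, natrM).
- repeat apply: pm; lra.
- lra.
- lra.
Qed.

Theorem corollary3p6 (a : seq nat) :
  (0 < size a)%N ->
  all (fun x => 0 < x)%N a ->
  a <> [:: 1; 1; 1; 1]%N ->
  (forall a2 : nat, a <> [:: 1; a2; 1]%N) ->
  a <> [:: 1; 1]%N ->
  a <> [:: 1]%N ->
  (V a <= (det_R a)%:R)%R.
Proof.
case: a => [|x t] // _ /andP [hx Ht] e4 e3 e2 e1.
rewrite /det_R.
have [x2|x1] := leqP 2 x.
  have X2 : (2:rat) <= x%:R by rewrite (ler_nat _ 2).
  rewrite cstep VE; apply: inv; [exact: Ht|..]; rewrite ?mul1n ?addn0 ?muln1; lra.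
have ex : x = 1%N by apply/eqP; rewrite eqn_leq -ltnS x1.
subst x.
case: t Ht e4 e3 e2 e1 => [|k t] Ht e4 e3 e2 e1; first by exfalso; apply: e1.
move/andP: Ht => [hk Ht].
have K1 : (1:rat) <= k%:R by rewrite ler1n.
case: t Ht e4 e3 e2 e1 => [|m t] Ht e4 e3 e2 e1.
  have k2 : (2 <= k)%N by rewrite ltn_neqAle eq_sym hk andbT; apply/eqP => h; apply: e2; rewrite h.
  have : (2:rat) <= k%:R by rewrite (ler_nat _ 2).
  rewrite !cstep !VE V0 ?mul1n ?addn0 ?muln1 ?(natrD, natrM); lra.
move/andP: Ht => [hm Ht].
have M1 : (1:rat) <= m%:R by rewrite ler1n.
have [m2|m1] := leqP 2 m.
  have M2 : (2:rat) <= m%:R by rewrite (ler_nat _ 2).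
  have H1 := pm (m%:R - 2) (k%:R - 1) ltac:(lra) ltac:(lra).
  rewrite !cstep !VE !mulrA; apply: inv; [exact: Ht|..]; rewrite ?mul1n ?addn0 ?muln1 ?(natrD, natrM).
  - repeat apply: pm; lra.
  - lra.
  - lra.
have em : m = 1%N by apply/eqP; rewrite eqn_leq -ltnS m1.
subst m.
case: t Ht e4 e3 e2 e1 => [|p t] Ht e4 e3 e2 e1.
  by exfalso; apply: (e3 k).
move/andP: Ht => [hp Ht].
have P1 : (1:rat) <= p%:R by rewrite ler1n.
have H0 := pm (p%:R - 1) (k%:R - 1) ltac:(lra) ltac:(lra).
have [kp|kp] := boolP ((2 <= k) || (2 <= p))%N.
  rewrite !cstep !VE !mulrA; apply: inv; [exact: Ht|..]; rewrite ?mul1n ?addn0 ?muln1 ?(natrD, natrM).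
  - repeat apply: pm; lra.
  - case/orP: kp => h.
      have K2 : (2:rat) <= k%:R by rewrite (ler_nat _ 2).
      have H1 := pm (k%:R - 2) (p%:R - 1) ltac:(lra) ltac:(lra).
      lra.
    have P2 : (2:rat) <= p%:R by rewrite (ler_nat _ 2).
    have H1 := pm (p%:R - 2) (k%:R - 1) ltac:(lra) ltac:(lra).
    lra.
  - lra.
have ek : k = 1%N by apply/eqP; rewrite eqn_leq hk andbT leqNgt; case/norP: kp.
have ep : p = 1%N by apply/eqP; rewrite eqn_leq hp andbT leqNgt; case/norP: kp.
subst k p.
case: t Ht e4 e3 e2 e1 => [|q t] Ht e4 e3 e2 e1; first by exfalso; apply: e4.
move/andP: Ht => [hq Ht].
have Q1 : (1:rat) <= q%:R by rewrite ler1n.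
exact: last5.
Qed.
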